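(* Let $G$ and $A$ be finite groups with $A$ acting on $G$ by automorphisms, and let $B\leq A$ (acting on $G$ by restriction). (i) If $\Gamma(G,B)$ is connected of diameter $d$, then $\Gamma(G,A)$ is connected of diameter at most $d$. (ii) If $\Gamma(G,B)$ has $m$ connected components, then $\Gamma(G,A)$ has at most $m$ connected components.
   Context: For a finite group $A$ acting by automorphisms on a finite group $G$, the commuting graph of $A$-orbits $\Gamma(G,A)$ is the simple graph whose vertex set is the set $\{x^{A}: x\in G\setminus\{1\}\}$ of $A$-orbits on $G\setminus\{1\}$, two distinct vertices $\mathcal{O},\mathcal{O}'$ being adjacent if and only if there exist $x\in\mathcal{O}$ and $y\in\mathcal{O}'$ with $xy=yx$. *)

(* Defs.v *)
From mathcomp Require Import all_boot all_fingroup.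
Set Implicit Arguments. Unset Strict Implicit. Unset Printing Implicit Defensive.
Local Open Scope group_scope.

Section Graphs.
Variable T : finType.

Definition grel (V : {set T}) (e : rel T) : rel T :=
  [rel x y | [&& x \in V, y \in V & e x y]].

Definition walk (V : {set T}) (e : rel T) (n : nat) (x y : T) : Prop :=
  x \in V /\ exists2 p : seq T, size p = n & path (grel V e) x p /\ last x p = y.

Definition diam_le (V : {set T}) (e : rel T) (d : nat) : Prop :=
  forall x y, x \in V -> y \in V -> exists2 n, n <= d & walk V e n x y.

Definition connected_graph (V : {set T}) (e : rel T) : Prop :=
  forall x y, x \in V -> y \in V -> exists n, walk V e n x y.

Definition has_diameter (V : {set T}) (e : rel T) (d : nat) : Prop :=
  diam_le V e d /\ (forall d', diam_le V e d' -> d <= d').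

Definition components (V : {set T}) (e : rel T) : {set {set T}} :=
  [set [set y in V | connect (grel V e) x y] | x in V].
End Graphs.

(* An action of the group A on G by automorphisms is given by a morphism
   phi : A -> {perm gT} with phi @* A \subset Aut G. *)
Section CommutingGraph.
Variables (gT aT : finGroupType) (A : {group aT}).
Variable phi : {morphism A >-> {perm gT}}.

Definition orbitA (B : {set aT}) (x : gT) : {set gT} :=
  [set (phi a) x | a in B].

Definition orbit_vertices (G : {set gT}) (B : {set aT}) : {set {set gT}} :=
  [set orbitA B x | x in G^#].

Definition commuting_adj : rel {set gT} :=
  [rel O O' : {set gT} | (O != O') &&
     [exists x in O, [exists y in O', x * y == y * x]]].
End CommutingGraph.

(* Main.v *)
Require Import Defs.
From mathcomp Require Import all_boot all_fingroup.
Set Implicit Arguments. Unset Strict Implicit. Unset Printing Implicit Defensive.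
Local Open Scope group_scope.

Section Aux.
Variables (gT aT : finGroupType) (G : {group gT}) (A B : {group aT}).
Variable phi : {morphism A >-> {perm gT}}.
Hypothesis sBA : B \subset A.

Lemma orb_self (C : {group aT}) x : x \in orbitA phi C x.
Proof. by apply/imsetP; exists 1; rewrite ?group1 // morph1 perm1. Qed.

Lemma orb_eq y x : y \in orbitA phi B x -> orbitA phi A y = orbitA phi A x.
Proof.
case/imsetP=> b bB ->; have bA := subsetP sBA b bB.
apply/setP=> z; apply/imsetP/imsetP=> [[a aA ->]|[a aA ->]].
  by exists (b * a); rewrite ?groupM // morphM // permM.
exists (b^-1 * a); rewrite ?groupM ?groupV //.
by rewrite -permM -morphM ?groupM ?groupV // mulKVg.
Qed.

Lemma orb_sub y x : y \in orbitA phi B x -> y \in orbitA phi A x.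
Proof. by move=> H; rewrite -(orb_eq H) orb_self. Qed.

Definition fA (O : {set gT}) := orbitA phi A (repr O).

Notation VB := (orbit_vertices phi G B).
Notation VA := (orbit_vertices phi G A).
Notation e := (@commuting_adj gT).

Lemma fA_orb x : fA (orbitA phi B x) = orbitA phi A x.
Proof. by apply: orb_eq; apply: mem_repr (orb_self B x). Qed.

Lemma fA_mem O z : O \in VB -> z \in O -> z \in fA O.
Proof.
case/imsetP=> x _ -> zO; rewrite fA_orb; exact: orb_sub.
Qed.

Lemma fA_V O : O \in VB -> fA O \in VA.
Proof. by case/imsetP=> x xG ->; rewrite fA_orb; apply/imsetP; exists x. Qed.

Lemma fA_surj X : X \in VA -> exists2 O, O \in VB & fA O = X.
Proof.
case/imsetP=> x xG ->; exists (orbitA phi B x); last exact: fA_orb.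
by apply/imsetP; exists x.
Qed.

Lemma fA_path p O : O \in VB -> path (Defs.grel VB e) O p ->
  exists2 q, size q <= size p &
    path (Defs.grel VA e) (fA O) q /\ last (fA O) q = fA (last O p).
Proof.
elim: p O => [|O1 p IH] O OV /=; first by move=> _; exists [::].
case/andP=> /and3P[_ O1V adj] pp.
have [q sq [pq lq]] := IH O1 O1V pp.
have [E|NE] := eqVneq (fA O) (fA O1).
  by exists q; [exact: leqW | rewrite E].
exists (fA O1 :: q) => //=; split=> //.
rewrite pq andbT /Defs.grel /commuting_adj /= fA_V // ?fA_V // NE /=.
case/andP: adj => _ /existsP[x /andP[xO /existsP[y /andP[yO c]]]].
apply/existsP; exists x; rewrite fA_mem //=.
by apply/existsP; exists y; rewrite fA_mem.
Qed.

Lemma fA_walk n O O' : walk VB e n O O' ->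
  exists2 m, m <= n & walk VA e m (fA O) (fA O').
Proof.
case=> OV [p sp [pp lp]].
have [q sq [pq lq]] := fA_path OV pp.
exists (size q); first by rewrite -sp.
by split; [exact: fA_V | exists q => //; rewrite lq lp].
Qed.

Lemma grel_sym (V : {set {set gT}}) : symmetric (Defs.grel V e).
Proof.
have H X Y : Defs.grel V e X Y -> Defs.grel V e Y X.
  rewrite /Defs.grel /commuting_adj /= => /and4P[XV YV NE].
  move=> /existsP[x /andP[xX /existsP[y /andP[yY c]]]].
  rewrite YV XV eq_sym NE /=; apply/existsP; exists y; rewrite yY /=.
  by apply/existsP; exists x; rewrite xX (eqP c) eqxx.
by move=> X Y; apply/idP/idP; apply: H.
Qed.

End Aux.

Theorem lemma2p1 (gT aT : finGroupType) (G : {group gT}) (A B : {group aT})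
    (phi : {morphism A >-> {perm gT}}) :
  phi @* A \subset Aut G ->
  B \subset A ->
  (forall d : nat,
      has_diameter (orbit_vertices phi G B) (@commuting_adj gT) d ->
      connected_graph (orbit_vertices phi G A) (@commuting_adj gT) /\
      diam_le (orbit_vertices phi G A) (@commuting_adj gT) d) /\
  (forall m : nat,
      #|components (orbit_vertices phi G B) (@commuting_adj gT)| = m ->
      #|components (orbit_vertices phi G A) (@commuting_adj gT)| <= m).
Proof.
move=> _ sBA; split.
  move=> d [dl _].
  have DL : diam_le (orbit_vertices phi G A) (@commuting_adj gT) d.
    move=> X Y XV YV.
    have [O OV <-] := fA_surj sBA XV.
    have [O' OV' <-] := fA_surj sBA YV.
    have [n nd w] := dl O O' OV OV'.
    have [k kn w'] := fA_walk sBA w.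
    by exists k => //; exact: leq_trans kn nd.
  split=> // X Y XV YV; have [n _ w] := DL X Y XV YV; by exists n.
move=> m <-.
set VA := orbit_vertices phi G A; set VB := orbit_vertices phi G B.
set e := @commuting_adj gT.
pose cA X := [set y in VA | connect (Defs.grel VA e) X y].
pose h (C : {set {set gT}}) := cA (fA phi (repr C)).
have conn O O' : O \in VB -> connect (Defs.grel VB e) O O' ->
    connect (Defs.grel VA e) (fA phi O) (fA phi O').
  move=> OV /connectP[p pp ->].
  have [q _ [pq lq]] := fA_path sBA OV pp.
  by apply/connectP; exists q.
have symA := sym_connect_sym (@grel_sym gT VA).
apply: leq_trans (leq_imset_card h _).
apply: subset_leq_card; apply/subsetP=> C /imsetP[X XV ->].
have [O OV <-] := fA_surj sBA XV.
apply/imsetP; exists [set y in VB | connect (Defs.grel VB e) O y].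
  by apply/imsetP; exists O.
have Oin : O \in [set y in VB | connect (Defs.grel VB e) O y].
  by rewrite inE OV connect0.
have := mem_repr O Oin; rewrite inE => /andP[_ cO].
have cAO := conn _ _ OV cO.
rewrite /h /cA; apply/setP=> Y; rewrite !inE; congr (_ && _).
apply/idP/idP=> H.
  by rewrite symA in cAO; apply: connect_trans cAO H.
by apply: connect_trans cAO H.
Qed.
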